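(* Let $\mathcal H$ be a Hilbert space of dimension $d$, let $H(t_i)=\sum_l E^i_l\Pi^i_l$ and $H(t_f)=\sum_k E^f_k\Pi^f_k$ be Hermitian operators on $\mathcal H$ with spectral projectors $\Pi^i_l,\Pi^f_k$, let $\Phi$ be a CPTP map on $\mathcal H$ and $\beta>0$. Let $\gamma_{\beta,i}=e^{-\beta H(t_i)}/\mathcal Z_{\beta,i}$, $\gamma_{\beta,f}=e^{-\beta H(t_f)}/\mathcal Z_{\beta,f}$ with $\mathcal Z_{\beta,i}=\mathrm{Tr}\,e^{-\beta H(t_i)}$, $\mathcal Z_{\beta,f}=\mathrm{Tr}\,e^{-\beta H(t_f)}$, and $\Delta F=-\beta^{-1}\ln(\mathcal Z_{\beta,f}/\mathcal Z_{\beta,i})$. Let $\rho_i$ be a density operator written as $\rho_i=(1-a)\gamma_{\beta,i}+a\tau$, where $a=A_w(\rho_i)$ is the weight of athermality of $\rho_i$ with respect to $\gamma_{\beta,i}$ and $\tau$ the corresponding minimal athermal state. Then the end-point-measurement average satisfies $$\big\langle e^{-\beta(\Delta E-\Delta F)}\big\rangle=\Big\{(1-a)d+a\,\mathrm{Tr}\big(\gamma_{\beta,i}^{-1}\tau\big)\Big\}\Big\{(1-a)\,\mathrm{Tr}\big(\gamma_{\beta,f}\Phi[\gamma_{\beta,i}]\big)+a\,\mathrm{Tr}\big(\gamma_{\beta,f}\Phi[\tau]\big)\Big\}.$$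
   Context: End-point-measurement (EPM) statistics: for an initial state $\rho_i$, the joint distribution is $p^{l,k}=\mathrm{Tr}(\rho_i\Pi^i_l)\,\mathrm{Tr}(\Phi[\rho_i]\Pi^f_k)$, the energy change along $(l,k)$ is $\Delta E_{l,k}=E^f_k-E^i_l$, and for a function $g$, $\langle g(\Delta E)\rangle:=\sum_{l,k}p^{l,k}g(\Delta E_{l,k})$. Weight of athermality: $A_w(\rho)=\min_{\tau\in\mathscr D(\mathcal H)}\{a\ge0:\rho=(1-a)\gamma_{\beta,i}+a\tau\}$, where $\mathscr D(\mathcal H)$ is the set of density operators; the minimal athermal state is the density operator $\tau$ attaining the minimum. *)

(* Defs.v *)
From HB Require Import structures.
From mathcomp Require Import all_boot all_order all_algebra.
From mathcomp Require Import reals.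
From mathcomp.analysis Require Import sequences exp.
From mathcomp.real_closed Require Import complex.

Set Implicit Arguments.
Unset Strict Implicit.
Unset Printing Implicit Defensive.

Import Order.TTheory GRing.Theory Num.Theory.
Local Open Scope ring_scope.
Local Open Scope complex_scope.

Section QDefs.
Variable R : realType.
Local Notation C := (R[i]).
Variable d : nat.

Definition adjmx (m n : nat) (A : 'M[C]_(m, n)) : 'M[C]_(n, m) :=
  \matrix_(i, j) (A j i)^*.

(* positive semidefinite: <v, A v> is real and nonnegative for every v *)
Definition psd (A : 'M[C]_d) : Prop :=
  forall v : 'cV[C]_d, 0 <= (adjmx v *m A *m v) 0 0.

Definition density (rho : 'M[C]_d) : Prop := psd rho /\ \tr rho = 1.

(* positive semidefiniteness of an n x n block operator on C^n (x) C^d,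
   given by its d x d blocks X a b *)
Definition block_psd (n : nat) (X : 'I_n -> 'I_n -> 'M[C]_d) : Prop :=
  forall v : 'I_n -> 'cV[C]_d,
    0 <= \sum_(a < n) \sum_(b < n) (adjmx (v a) *m X a b *m v b) 0 0.

(* id_n (x) Phi preserves positivity for every n *)
Definition completely_positive (Phi : 'M[C]_d -> 'M[C]_d) : Prop :=
  forall (n : nat) (X : 'I_n -> 'I_n -> 'M[C]_d),
    block_psd X -> block_psd (fun a b => Phi (X a b)).

Definition trace_preserving (Phi : 'M[C]_d -> 'M[C]_d) : Prop :=
  forall X : 'M[C]_d, \tr (Phi X) = \tr X.

Definition CPTP (Phi : 'M[C]_d -> 'M[C]_d) : Prop :=
  completely_positive Phi /\ trace_preserving Phi.

Definition spectral_decomposition (m : nat) (H : 'M[C]_d)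
    (E : 'I_m -> R) (P : 'I_m -> 'M[C]_d) : Prop :=
  [/\ injective E,
      (forall l, P l != 0) /\ (forall l, adjmx (P l) = P l),
      (forall l k, P l *m P k = if l == k then P l else 0),
      \sum_(l < m) P l = 1%:M
    & H = \sum_(l < m) (E l)%:C *: P l].

Definition exp_mbetaH (m : nat) (beta : R) (E : 'I_m -> R) (P : 'I_m -> 'M[C]_d)
  : 'M[C]_d := \sum_(l < m) (expR (- (beta * E l)))%:C *: P l.

Definition partZ (m : nat) (beta : R) (E : 'I_m -> R) (P : 'I_m -> 'M[C]_d) : R :=
  complex.Re (\tr (exp_mbetaH beta E P)).

Definition gibbs (m : nat) (beta : R) (E : 'I_m -> R) (P : 'I_m -> 'M[C]_d)
  : 'M[C]_d := ((partZ beta E P)^-1)%:C *: exp_mbetaH beta E P.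

Definition deltaF (mi mf : nat) (beta : R)
    (Ei : 'I_mi -> R) (Pi : 'I_mi -> 'M[C]_d)
    (Ef : 'I_mf -> R) (Pf : 'I_mf -> 'M[C]_d) : R :=
  - (beta^-1 * ln (partZ beta Ef Pf / partZ beta Ei Pi)).

Definition epm_avg (mi mf : nat) (rho : 'M[C]_d) (Phi : 'M[C]_d -> 'M[C]_d)
    (Ei : 'I_mi -> R) (Pi : 'I_mi -> 'M[C]_d)
    (Ef : 'I_mf -> R) (Pf : 'I_mf -> 'M[C]_d) (g : R -> R) : C :=
  \sum_(l < mi) \sum_(k < mf)
     (\tr (rho *m Pi l) * \tr (Phi rho *m Pf k)) * (g (Ef k - Ei l))%:C.

(* a = A_w(rho) (weight of athermality w.r.t. gam) and tau is a minimal
   athermal state: (a, tau) attains the minimum in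
   A_w(rho) = min_{tau density} { a >= 0 : rho = (1-a) gam + a tau } *)
Definition weight_of_athermality (gam rho : 'M[C]_d) (a : R) (tau : 'M[C]_d)
  : Prop :=
  [/\ density tau, 0 <= a,
      rho = (1 - a)%:C *: gam + a%:C *: tau
    & forall (a' : R) (tau' : 'M[C]_d), density tau' -> 0 <= a' ->
        rho = (1 - a')%:C *: gam + a'%:C *: tau' -> a <= a'].

End QDefs.

(* Main.v *)
Require Import Defs.
From HB Require Import structures.
From mathcomp Require Import all_boot all_order all_algebra.
From mathcomp Require Import reals.
From mathcomp.analysis Require Import sequences exp.
From mathcomp.real_closed Require Import complex.
From mathcomp Require Import ring.

Import Order.TTheory GRing.Theory Num.Theory.
Local Open Scope ring_scope.
Local Open Scope complex_scope.

Section Aux.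
Variable R : realType.
Local Notation C := (R[i]).
Variable d : nat.

Lemma trP_gt0 (P : 'M[C]_d) : P != 0 -> adjmx P = P -> P *m P = P -> 0 < \tr P.
Proof.
move=> P0 PA PP.
have Pji i j : P j i = (P i j)^*.
  have := congr1 (fun M : 'M[C]_d => M i j) PA; rewrite mxE => <-.
  by rewrite conjcK.
have -> : \tr P = \sum_(p : 'I_d * 'I_d) P p.1 p.2 * (P p.1 p.2)^*.
  rewrite -(pair_bigA _ (fun i j => P i j * (P i j)^*)) -{1}PP /mxtrace /=; apply: eq_bigr => i _.
  rewrite mxE; apply: eq_bigr => j _ /=. by rewrite [P j i]Pji.
have ge0 : forall p : 'I_d * 'I_d, true -> 0 <= P p.1 p.2 * (P p.1 p.2)^* by move=> p _; exact: mulcJ_ge0.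
rewrite lt_def sumr_ge0 // andbT psumr_eq0 //.
apply: contra P0 => /allP H; apply/eqP/matrixP => i j; rewrite mxE.
have := H (i, j); rewrite mem_index_enum => /(_ isT) /=.
by rewrite -sqr_normc sqrf_eq0 normr_eq0 => /eqP.
Qed.

Lemma tr_sum_pos (m : nat) (P : 'I_m -> 'M[C]_d) (c : 'I_m -> R) :
  (forall l, P l != 0) -> (forall l, adjmx (P l) = P l) ->
  (forall l k, P l *m P k = if l == k then P l else 0) ->
  \sum_(l < m) P l = 1%:M -> (0 < d)%N -> (forall l, 0 < c l) ->
  0 < \tr (\sum_(l < m) (c l)%:C *: P l).
Proof.
move=> Pn0 PA PP sP d0 cp.
rewrite linear_sum /=.
case: m P Pn0 PA PP sP c cp => [|m] P Pn0 PA PP sP c cp.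
  exfalso; move: sP; rewrite big_ord0 => /matrixP /(_ (Ordinal d0) (Ordinal d0)).
  by rewrite !mxE eqxx /= => /eqP; rewrite eq_sym oner_eq0.
rewrite big_ord_recl; apply: ltr_wpDr.
  apply: sumr_ge0 => l _; rewrite mxtraceZ; apply: mulr_ge0.
    by rewrite lecR ltW.
  apply: ltW; apply: trP_gt0 => //; by rewrite PP eqxx.
rewrite mxtraceZ; apply: mulr_gt0; first by rewrite ltcR.
by apply: trP_gt0 => //; rewrite PP eqxx.
Qed.

Lemma gt0_real (z : C) : 0 < z -> 0 < complex.Re z /\ z = (complex.Re z)%:C.
Proof.
case: z => a b; rewrite ltcE /= => /andP [/eqP -> ->]; by split.
Qed.

Lemma sum_inv (m : nat) (P : 'I_m -> 'M[C]_d) (c : 'I_m -> R) :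
  (forall l k, P l *m P k = if l == k then P l else 0) ->
  \sum_(l < m) P l = 1%:M -> (forall l, c l != 0) ->
  (\sum_(l < m) (c l)%:C *: P l) *m (\sum_(l < m) ((c l)^-1)%:C *: P l) = 1%:M.
Proof.
move=> PP sP cn0; rewrite -sP mulmx_suml; apply: eq_bigr => l _.
rewrite mulmx_sumr (bigD1 l) //= big1 ?addr0.
  by rewrite -scalemxAl -scalemxAr PP eqxx scalerA -rmorphM /= mulfV // scale1r.
move=> k /negbTE kl; rewrite -scalemxAl -scalemxAr PP eq_sym kl.
by rewrite !scaler0.
Qed.
End Aux.

Theorem mainTheorem2 (R : realType) (d mi mf : nat)
    (Hi : 'M[R[i]]_d) (Ei : 'I_mi -> R) (Pi : 'I_mi -> 'M[R[i]]_d)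
    (Hf : 'M[R[i]]_d) (Ef : 'I_mf -> R) (Pf : 'I_mf -> 'M[R[i]]_d)
    (Phi : {linear 'M[R[i]]_d -> 'M[R[i]]_d}) (beta : R)
    (rho tau : 'M[R[i]]_d) (a : R) :
  spectral_decomposition Hi Ei Pi ->
  spectral_decomposition Hf Ef Pf ->
  CPTP Phi ->
  0 < beta ->
  density rho ->
  weight_of_athermality (gibbs beta Ei Pi) rho a tau ->
  epm_avg rho Phi Ei Pi Ef Pf
    (fun dE => expR (- (beta * (dE - deltaF beta Ei Pi Ef Pf)))) =
  ((1 - a)%:C * d%:R + a%:C * \tr (invmx (gibbs beta Ei Pi) *m tau)) *
  ((1 - a)%:C * \tr (gibbs beta Ef Pf *m Phi (gibbs beta Ei Pi))
   + a%:C * \tr (gibbs beta Ef Pf *m Phi tau)).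
Proof.
destruct d as [|d].
  have tr0 : forall A : 'M[R[i]]_0, \tr A = 0 by move=> A; rewrite /mxtrace big_ord0.
  move=> *; rewrite !tr0 !mulr0 addr0 mul0r /epm_avg big1 // => l _.
  by rewrite big1 // => k _; rewrite tr0 !mul0r.
move=> [_ [Pin0 PiA] PiP sPi _] [_ [Pfn0 PfA] PfP sPf _] [_ TP] bpos _ [_ _ rhoE _].
pose ei l := expR (- (beta * Ei l)).
pose ef k := expR (- (beta * Ef k)).
have [Zip trEi] : 0 < partZ beta Ei Pi /\ \tr (exp_mbetaH beta Ei Pi) = (partZ beta Ei Pi)%:C.
  by apply: gt0_real; apply: tr_sum_pos => // l; apply: expR_gt0.
have [Zfp trEf] : 0 < partZ beta Ef Pf /\ \tr (exp_mbetaH beta Ef Pf) = (partZ beta Ef Pf)%:C.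
  by apply: gt0_real; apply: tr_sum_pos => // l; apply: expR_gt0.
set Zi := partZ beta Ei Pi in Zip trEi *.
set Zf := partZ beta Ef Pf in Zfp trEf *.
have gi : gibbs beta Ei Pi = \sum_l (Zi^-1 * ei l)%:C *: Pi l.
  rewrite /gibbs /exp_mbetaH -/Zi scaler_sumr; apply: eq_bigr => l _.
  by rewrite scalerA -rmorphM.
have gf : gibbs beta Ef Pf = \sum_k (Zf^-1 * ef k)%:C *: Pf k.
  rewrite /gibbs /exp_mbetaH -/Zf scaler_sumr; apply: eq_bigr => l _.
  by rewrite scalerA -rmorphM.
set M := \sum_l ((Zi^-1 * ei l)^-1)%:C *: Pi l.
have gM : gibbs beta Ei Pi *m M = 1%:M.
  rewrite gi; apply: sum_inv => // l.
  by rewrite mulf_neq0 // ?invr_eq0 gt_eqF // expR_gt0.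
have Mg : M *m gibbs beta Ei Pi = 1%:M by apply: mulmx1C.
have invM : invmx (gibbs beta Ei Pi) = M.
  have [U _] := mulmx1_unit gM.
  by rewrite -[M](mulKmx U) gM mulmx1.
have trM X : \tr (M *m X) = \sum_l \tr (X *m Pi l) * ((Zi^-1 * ei l)^-1)%:C.
  rewrite mulmx_suml linear_sum; apply: eq_bigr => l _ /=.
  by rewrite -scalemxAl mxtraceZ mxtrace_mulC mulrC.
have trG X : \tr (gibbs beta Ef Pf *m X) = \sum_k \tr (X *m Pf k) * (Zf^-1 * ef k)%:C.
  rewrite gf mulmx_suml linear_sum; apply: eq_bigr => l _ /=.
  by rewrite -scalemxAl mxtraceZ mxtrace_mulC mulrC.
have key : forall l k, expR (- (beta * ((Ef k - Ei l) - deltaF beta Ei Pi Ef Pf)))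
    = (Zi^-1 * ei l)^-1 * (Zf^-1 * ef k).
  move=> l k; rewrite /deltaF -/Zi -/Zf /ei /ef.
  have xp : 0 < Zf / Zi by apply: divr_gt0.
  have -> : - (beta * ((Ef k - Ei l) - - (beta^-1 * ln (Zf / Zi)))) =
     - (beta * Ef k) + (beta * Ei l + - ln (Zf / Zi)).
    by field; rewrite gt_eqF.
  rewrite !expRD [expR (- ln _)]expRN lnK ?posrE // [expR (- (beta * Ei l))]expRN.
  have := expR_gt0 (beta * Ei l); have := expR_gt0 (- (beta * Ef k)).
  move=> h1 h2; field.
  by rewrite !gt_eqF.
have LHS : epm_avg rho Phi Ei Pi Ef Pf
    (fun dE => expR (- (beta * (dE - deltaF beta Ei Pi Ef Pf)))) =
    \tr (M *m rho) * \tr (gibbs beta Ef Pf *m Phi rho).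
  rewrite trM trG big_distrl /=; apply: eq_bigr => l _.
  rewrite big_distrr /=; apply: eq_bigr => k _.
  by rewrite key rmorphM /=; rewrite mulrACA.
rewrite LHS invM rhoE; set gI := gibbs beta Ei Pi in Mg *; set gF := gibbs beta Ef Pf.
clearbody gI gF.
rewrite mulmxDr -!scalemxAr linearD /= !mxtraceZ Mg mxtrace1.
by rewrite linearD /= !linearZ /= mulmxDr -!scalemxAr linearD /= !mxtraceZ.
Qed.
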